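(* If $\mu$ is an edge probability measure, then \[ 2\sum_{e\in\operatorname{supp}\mu}\mu(e)^2+\beta(\mu;P_3)\le 2, \] with equality if and only if $|\operatorname{supp}\mu|=1$.
   Context: $P_3$ is the path on 3 vertices. An edge probability measure is a probability measure $\mu$ on the edge set $E(K)$ of some finite complete graph $K$; $\operatorname{supp}\mu$ is the set of edges of positive mass. For a subgraph $H'\subseteq K$, $\mu(H')=\prod_{e\in E(H')}\mu(e)$, and $\beta(\mu;H)=\sum_{H'}\mu(H')$, the sum over all subgraphs $H'$ of $K$ isomorphic to $H$. *)

(* Defs.v *)
From mathcomp Require Import all_boot all_order all_algebra.
Set Implicit Arguments. Unset Strict Implicit. Unset Printing Implicit Defensive.
Import Order.TTheory GRing.Theory Num.Theory.
Local Open Scope ring_scope.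

(* The complete graph K on the finite vertex type T: its edges are the
   2-element subsets of T. *)
Definition edges (T : finType) : {set {set T}} := [set e : {set T} | #|e| == 2%N].

Section EdgeMeasure.
Variables (R : realFieldType) (T : finType).

(* An edge probability measure: mu is nonnegative on E(K) and sums to 1 over
   E(K). Values of mu outside E(K) are irrelevant (never used). *)
Definition edge_prob_measure (mu : {set T} -> R) : Prop :=
  (forall e, e \in edges T -> 0 <= mu e) /\ \sum_(e in edges T) mu e = 1.

Definition supp (mu : {set T} -> R) : {set {set T}} :=
  [set e in edges T | 0 < mu e].

(* Copies of P_3 in K, identified with their edge sets: two distinct edges
   of K sharing a vertex (a subgraph of K isomorphic to P_3 is determined by
   its edge set, as P_3 has no isolated vertices). *)
Definition P3_copies : {set {set {set T}}} :=
  [set S : {set {set T}} | [&& S \subset edges T, #|S| == 2%N &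
     [forall e in S, forall f in S, (e != f) ==> (e :&: f != set0)]]].

Definition mu_sub (mu : {set T} -> R) (S : {set {set T}}) : R :=
  \prod_(e in S) mu e.

Definition beta_P3 (mu : {set T} -> R) : R :=
  \sum_(S in P3_copies) mu_sub mu S.
End EdgeMeasure.

(* Main.v *)
Require Import Defs.
From mathcomp Require Import all_boot all_order all_algebra.
From mathcomp Require Import lra.
Import Order.TTheory GRing.Theory Num.Theory.
Local Open Scope ring_scope.

Section Aux.
Variables (R : realFieldType) (T : finType) (mu : {set T} -> R).
Hypothesis H0 : forall e, e \in edges T -> 0 <= mu e.

Definition PP (p : {set T} * {set T}) :=
  (p.1 \in edges T) && ((p.2 \in edges T) && (p.2 != p.1)).

Definition DD : R := \sum_(p | PP p) mu p.1 * mu p.2.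

Lemma supp_sum (f : R -> R) : f 0 = 0 ->
  \sum_(e in supp mu) f (mu e) = \sum_(e in edges T) f (mu e).
Proof.
move=> f0; rewrite [RHS](bigID (fun e => 0 < mu e)) /=.
rewrite [X in _ = _ + X]big1 ?addr0.
  by apply: eq_bigl => e; rewrite /supp inE.
move=> e /andP [eE]; rewrite -leNgt => le0.
by have -> : mu e = 0 by apply/eqP; rewrite eq_le le0 H0.
Qed.

Lemma QD : \sum_(e in edges T) mu e ^+ 2 + DD = (\sum_(e in edges T) mu e) ^+ 2.
Proof.
rewrite expr2 mulr_suml.
under [RHS]eq_bigr => e eE.
  rewrite mulr_sumr (bigD1 e) //=.
over.
rewrite big_split /= /DD /PP pair_big_dep /=.
by congr (_ + _); apply: eq_bigr => e _; rewrite expr2.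
Qed.

Lemma DD_ge0 : 0 <= DD.
Proof.
apply: sumr_ge0 => p /andP [h1 /andP [h2 _]]; apply: mulr_ge0; exact: H0.
Qed.

Lemma beta_ge0 : 0 <= beta_P3 mu.
Proof.
apply: sumr_ge0 => S; rewrite inE => /andP [sE _].
apply: prodr_ge0 => e eS; apply: H0; exact: (subsetP sE).
Qed.

Lemma pair_set (a b x y : {set T}) : a != b -> a \in edges T -> b \in edges T ->
  PP (x, y) && ([set x; y] == [set a; b]) = ((x, y) \in [set (a, b); (b, a)]).
Proof.
move=> ab aE bE; rewrite /PP /=.
apply/idP/idP.
  case/andP => /andP [xE /andP [yE yx]] /eqP eS.
  have : x \in [set a; b] by rewrite -eS set21.
  have : y \in [set a; b] by rewrite -eS set22.
  rewrite !in_set2 => /orP [/eqP ey | /eqP ey] /orP [/eqP ex | /eqP ex];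
    rewrite ey ex in yx *; rewrite ?eqxx ?orbT //;
    by rewrite eqxx in yx.
rewrite in_set2 => /orP [/eqP [-> ->] | /eqP [-> ->]]; rewrite aE bE /=.
  by rewrite eq_sym ab eqxx.
by rewrite ab setUC eqxx.
Qed.

Lemma beta_le : 2 * beta_P3 mu <= DD.
Proof.
rewrite /DD (partition_big (fun p => [set p.1; p.2]) predT) //=.
rewrite [X in _ <= X](bigID (fun S => S \in P3_copies T)) /=.
rewrite -[X in X <= _]addr0; apply: lerD; last first.
  by apply: sumr_ge0 => S _; apply: sumr_ge0 => p /andP [/andP [h1 /andP [h2 _]] _];
    apply: mulr_ge0; apply: H0.
rewrite /beta_P3 mulr_sumr; apply: ler_sum => S; rewrite inE => /and3P [sE c2 _].
case/cards2P: c2 => a [b [ab Sab]].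
have aE : a \in edges T by apply: (subsetP sE); rewrite Sab !inE eqxx.
have bE : b \in edges T by apply: (subsetP sE); rewrite Sab !inE eqxx orbT.
rewrite Sab /mu_sub big_setU1 /= ?big_set1; last by rewrite inE.
rewrite (eq_bigl (fun p => p \in [set (a, b); (b, a)])); last first.
  by case=> x y; rewrite pair_set.
rewrite big_setU1 /= ?big_set1; last first.
  by rewrite inE; apply/eqP => [[]] /eqP; rewrite (negbTE ab).
rewrite (mulrC (mu b)); lra.
Qed.

End Aux.

Theorem proposition4p1 (R : realFieldType) (T : finType) (mu : {set T} -> R) :
  edge_prob_measure mu ->
  2 * (\sum_(e in supp mu) mu e ^+ 2) + beta_P3 mu <= 2 /\
  (2 * (\sum_(e in supp mu) mu e ^+ 2) + beta_P3 mu = 2 <-> #|supp mu| = 1%N).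
Proof.
case=> H0 Hs.
have Q0 := @supp_sum _ _ _ H0 (fun x => x ^+ 2) (expr0n _ 2).
have S0 := @supp_sum _ _ _ H0 id erefl.
rewrite /= in Q0 S0.
have QD1 := @QD _ _ mu; rewrite Hs expr1n in QD1.
have Dg := @DD_ge0 _ _ _ H0; have Bg := @beta_ge0 _ _ _ H0; have Bl := @beta_le _ _ _ H0.
rewrite Q0; split; first lra.
split.
  move=> Heq.
  have D0 : DD _ _ mu = 0 by lra.
  have Z : forall p, PP T p -> mu p.1 * mu p.2 = 0.
    apply: psumr_eq0P D0 => p /andP [h1 /andP [h2 _]].
    by apply: mulr_ge0; apply: H0.
  case: (set_0Vmem (supp mu)) => [E0 | [a aS]].
    by move: Hs; rewrite -S0 E0 big_set0 => /eqP; rewrite eq_sym oner_eq0.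
  apply/eqP/cards1P; exists a; apply/setP => e; rewrite inE.
  apply/idP/eqP => [eS | -> //]; apply/eqP; apply/negPn/negP => ea.
  move: aS eS => /setIdP [aE pa] /setIdP [eE pe].
  have hp : PP T (e, a) by rewrite /PP /= eE aE eq_sym.
  move: (Z _ hp) => /eqP /=.
  by rewrite mulf_eq0 !gt_eqF.
move=> /eqP /cards1P [a Sa].
move: Hs; rewrite -S0 Sa big_set1 => ma.
rewrite -Q0 Sa big_set1 /= ma expr1n in QD1 *.
have D0 : DD _ _ mu = 0 by lra.
lra.
Qed.
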